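(* A finite graph is isomorphic to an induced subgraph of the power graph of some finite group if and only if it is the comparability graph of a partial order. Moreover, the group can be taken to be cyclic of squarefree order.
   Context: The power graph of a group $G$ has vertex set $G$, distinct $x,y$ adjacent iff one is a power of the other. The comparability graph of a partial order $(A,\leqslant)$ has vertex set $A$, with distinct $a,b$ adjacent iff $a\leqslant b$ or $b\leqslant a$. *)

(* Defs.v *)
From mathcomp Require Import all_boot all_fingroup all_solvable.
Set Implicit Arguments. Unset Strict Implicit. Unset Printing Implicit Defensive.
Local Open Scope group_scope.

Definition simple_graph (V : finType) (e : rel V) : Prop :=
  symmetric e /\ irreflexive e.

Definition is_power (gT : finGroupType) (x y : gT) : Prop :=
  exists n : nat, x = y ^+ n.

Definition power_adj (gT : finGroupType) (x y : gT) : Prop :=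
  x <> y /\ (is_power x y \/ is_power y x).

Definition induced_in_power_graph (V : finType) (e : rel V) (gT : finGroupType) : Prop :=
  exists f : V -> gT, injective f /\ forall x y : V, e x y <-> power_adj (f x) (f y).

Definition partial_order (V : finType) (le : rel V) : Prop :=
  reflexive le /\ antisymmetric le /\ transitive le.

Definition is_comparability_graph (V : finType) (e : rel V) : Prop :=
  exists le : rel V, partial_order le /\
    forall x y : V, e x y <-> (x <> y /\ (le x y \/ le y x)).

Definition squarefree (n : nat) : Prop :=
  forall p : nat, prime p -> ~ (p * p %| n)%N.

(* Main.v *)
Require Import Defs.
From mathcomp Require Import all_boot all_fingroup all_solvable.
From mathcomp Require Import ssralg zmodp.
Local Open Scope group_scope.

Set Implicit Arguments. Unset Strict Implicit. Unset Printing Implicit Defensive.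

Fixpoint nthp (n : nat) : nat :=
  match n with 0 => 2 | k.+1 => s2val (prime_above (nthp k)) end.

Lemma nthp_prime n : prime (nthp n).
Proof. by case: n => [|n] //=; case: (prime_above _) => /=. Qed.

Lemma nthp_lt m n : m < n -> nthp m < nthp n.
Proof.
elim: n => [//|n IH]; rewrite ltnS leq_eqVlt => /orP[/eqP->|/IH h].
  by rewrite /=; case: (prime_above _).
by apply: (ltn_trans h); rewrite /=; case: (prime_above _).
Qed.

Lemma nthp_inj : injective nthp.
Proof.
move=> m n E; case: (ltngtP m n) => // /nthp_lt; by rewrite E ltnn.
Qed.

Lemma prime_dvd_prodE (I : finType) (P : pred I) (F : I -> nat) q :
  prime q -> q %| \prod_(i | P i) F i -> exists2 i, P i & q %| F i.
Proof.
move=> pq; rewrite Euclid_dvd_prod // big_has_cond => /hasP[i _ /andP[Pi qi]].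
by exists i.
Qed.

Lemma pow_in_cycle (gT : finGroupType) (x y : gT) : is_power x y <-> x \in <[y]>.
Proof. by split=> [[n ->]|/cycleP[n ->]]; [rewrite mem_cycle | exists n]. Qed.

Lemma forward (V : finType) (e : rel V) (gT : finGroupType) :
  induced_in_power_graph e gT -> is_comparability_graph e.
Proof.
case=> f [finj Hf].
pose le := fun x y : V => (f x \in <[f y]>) &&
   ((<[f x]> != <[f y]>) || (enum_rank x <= enum_rank y)).
exists [rel x y | le x y]; split; first split; [|split|].
- by move=> x /=; rewrite /le cycle_id leqnn orbT.
- move=> x y /andP[/andP[xy h1] /andP[yx h2]].
  have E : <[f x]> = <[f y]>.
    by apply/eqP; rewrite eqEsubset !cycle_subG xy yx.
  move: h1 h2; rewrite E eqxx /= => h1 h2.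
  by apply: enum_rank_inj; apply: val_inj; apply/eqP; rewrite /= eqn_leq h1 h2.
- move=> y x z /andP[xy h1] /andP[yz h2]; apply/andP.
  have sxy : <[f x]> \subset <[f y]> by rewrite cycle_subG.
  have syz : <[f y]> \subset <[f z]> by rewrite cycle_subG.
  split; first by rewrite -cycle_subG (subset_trans sxy syz).
  case: eqP => //= Exz.
  have Eyz : <[f y]> = <[f z]>.
    by apply/eqP; rewrite eqEsubset syz -Exz sxy.
  have Exy : <[f x]> = <[f y]> by rewrite Exz Eyz.
  move: h1 h2; rewrite Exy Eyz eqxx /=; exact: leq_trans.
- move=> x y; apply: iff_trans (Hf x y) _; rewrite /power_adj /=.
  have ne : f x <> f y <-> x <> y by split => [h E|h E]; apply: h; [rewrite E|apply: finj].
  split.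
  + case=> nfxy H; split; first by apply/ne.
    case: H => /pow_in_cycle H.
    * case: (eqVneq <[f x]> <[f y]>) => E.
      -- case: (leqP (enum_rank x) (enum_rank y)) => h.
         ++ by left; rewrite /le H h orbT.
         ++ right; rewrite /le (ltnW h) orbT andbT -cycle_subG -E cycle_subG cycle_id //.
      -- by left; rewrite /le H E.
    * case: (eqVneq <[f y]> <[f x]>) => E.
      -- case: (leqP (enum_rank y) (enum_rank x)) => h.
         ++ by right; rewrite /le H h orbT.
         ++ left; rewrite /le (ltnW h) orbT andbT -cycle_subG -E cycle_subG cycle_id //.
      -- by right; rewrite /le H E.
  + case=> nxy H; split; first by apply/ne.
    by case: H => /andP[H _]; [left|right]; apply/pow_in_cycle.
Qed.

Section Back.
Variables (V : finType) (le : rel V).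
Hypothesis Hle : partial_order le.

Let p (w : V) := nthp (enum_rank w).
Let p_prime w : prime (p w). Proof. exact: nthp_prime. Qed.
Let p_inj : injective p.
Proof. by move=> u v /nthp_inj /val_inj /enum_rank_inj. Qed.

Let N := (\prod_(w : V) p w)%N.
Let c (v : V) := (\prod_(w | ~~ le w v) p w)%N.

Let N_gt0 : 0 < N.
Proof. by rewrite prodn_gt0 // => w; rewrite prime_gt0. Qed.

Let c_dvd v : (c v %| N)%N.
Proof.
rewrite /N (bigID (fun w => ~~ le w v)) /=; exact: dvdn_mulr.
Qed.

Let c_le u v : (c v %| c u)%N = le u v.
Proof.
case: Hle => refl [anti trans].
apply/idP/idP => [H|H].
  apply: contraLR H => nuv.
  have pu : (p u %| c v)%N by rewrite /c (bigD1 u) //= dvdn_mulr.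
  apply/negP => /(dvdn_trans pu) /(prime_dvd_prodE (p_prime u)) [w nw].
  rewrite dvdn_prime2 // => /eqP /p_inj Euw; subst w.
  by rewrite refl in nw.
rewrite /c [X in (_ %| X)%N](bigID (fun w => ~~ le w v)) /=.
rewrite (eq_bigl (fun w => ~~ le w v) (P1 := fun w => ~~ le w u && ~~ le w v)) ?dvdn_mulr // => w.
case nwv: (le w v); rewrite ?andbF //= andbT.
by apply/negP => wu; move: nwv; rewrite (trans _ _ _ wu H).
Qed.

Let M := (N.-1).+1.
Let MN : M = N. Proof. by rewrite /M prednK. Qed.

Definition fmap (v : V) : 'I_M := inZp (c v).

Lemma fmap_cycle u v : (fmap u \in <[fmap v]>) = le u v.
Proof.
rewrite -c_le; apply/cycleP/idP => [[n E]|H].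
  have := congr1 (@nat_of_ord _) E; rewrite Zp_expg /= (prednK N_gt0) => E'.
  have := congr1 (fun t => t %% c v)%N E'.
  rewrite !(modn_dvdm _ (c_dvd v)) -modnMml (modn_dvdm _ (c_dvd v)) modnn mul0n mod0n.
  by move/eqP.
exists (c u %/ c v)%N; apply: val_inj.
by rewrite Zp_expg /= (prednK N_gt0) modnMml mulnC divnK.
Qed.

Lemma fmap_inj : injective fmap.
Proof.
case: Hle => refl [anti trans].
move=> u v E; apply: anti.
by rewrite -!fmap_cycle E cycle_id.
Qed.


Lemma N_sqf : squarefree N.
Proof.
move=> q pq qq.
have [w _ qw] := prime_dvd_prodE pq (dvdn_trans (dvdn_mulr q (dvdnn q)) qq).
move: qw; rewrite (dvdn_prime2 pq (p_prime w)) => /eqP Eq; subst q.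
move: qq; rewrite /N (bigD1 w) //= dvdn_pmul2l ?prime_gt0 //.
move/(prime_dvd_prodE (p_prime w)) => [w' nw'].
by rewrite dvdn_prime2 // => /eqP /p_inj Ew; rewrite Ew eqxx in nw'.
Qed.

Lemma back (e : rel V) (He : forall x y, e x y <-> (x <> y /\ (le x y \/ le y x))) :
  exists gT : finGroupType,
    cyclic [set: gT] /\ squarefree #|gT| /\ induced_in_power_graph e gT.
Proof.
exists ('I_M : finGroupType); split; first by rewrite Zp_cycle cycle_cyclic.
split; first by rewrite card_ord (prednK N_gt0); exact: N_sqf.
exists fmap; split; first exact: fmap_inj.
move=> x y; apply: iff_trans (He x y) _; rewrite /power_adj.
have ne : fmap x <> fmap y <-> x <> y.
  by split => [h E|h E]; apply: h; [rewrite E|apply: fmap_inj].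
split; case=> h1 h2; (split; first by apply/ne).
  by case: h2 => h2; [left|right]; apply/pow_in_cycle; rewrite fmap_cycle.
by case: h2 => /pow_in_cycle; rewrite fmap_cycle; [left|right].
Qed.

End Back.

Theorem mainTheorem9 (V : finType) (e : rel V) (He : simple_graph e) :
  ((exists gT : finGroupType, induced_in_power_graph e gT) <->
     is_comparability_graph e) /\
  (is_comparability_graph e ->
     exists gT : finGroupType,
       cyclic [set: gT] /\ squarefree #|gT| /\ induced_in_power_graph e gT).
Proof.
have B : is_comparability_graph e ->
     exists gT : finGroupType,
       cyclic [set: gT] /\ squarefree #|gT| /\ induced_in_power_graph e gT.
  by case=> le [Hle He']; exact: (back Hle He').
split=> //; split; first by case=> gT; exact: forward.
by move/B => [gT [_ [_ H]]]; exists gT.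
Qed.
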